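(* Let $\mathcal C$ be a small upper-triangular linear category. Then for all $i\ge0$ $$\operatorname{HH}_i(\mathcal C)\cong\bigoplus_{x\in\operatorname{Ob}(\mathcal C)}\operatorname{HH}_i(\mathcal C(x,x)),$$ where $\operatorname{HH}_i(\mathcal C(x,x))$ is the Hochschild homology of the endomorphism ring $\mathcal C(x,x)$.
   Context: A small linear category $\mathcal C$ is upper-triangular if there is a partial order $\le$ on $\operatorname{Ob}(\mathcal C)$ such that $\mathcal C(x,y)\neq0$ implies $x\le y$. The Hochschild–Mitchell complex of $\mathcal C$ has $C_n=\bigoplus_{x_0,\dots,x_n\in\operatorname{Ob}(\mathcal C)}\mathcal C(x_n,x_0)\otimes\mathcal C(x_{n-1},x_n)\otimes\dots\otimes\mathcal C(x_0,x_1)$ (tensor over $\mathbb Z$) with differential $d_n(f_n\otimes\dots\otimes f_0)=\sum_{i=0}^{n-1}(-1)^i f_n\otimes\dots\otimes f_{n-i}f_{n-i-1}\otimes\dots\otimes f_0+(-1)^n f_0f_n\otimes f_{n-1}\otimes\dots\otimes f_1$; $\operatorname{HH}_*(\mathcal C)$ is its homology. For a ring $R$ (a one-object linear category), this is the usual Hochschild complex $C_n(R)=R^{\otimes n+1}$. *)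

(* Defs.v *)
From HB Require Import structures.
From mathcomp Require Import all_boot all_algebra.
Import GRing.Theory.

(* Small (Z-)linear categories: hom-sets are abelian groups (zmodType) *)
(* and composition is biadditive.  comp x y z g f = g o f : x -> z.    *)
Record linCat := LinCat {
  Ob : eqType;
  Hom : Ob -> Ob -> zmodType;
  comp : forall x y z : Ob, Hom y z -> Hom x y -> Hom x z;
  idm : forall x : Ob, Hom x x;
  comp_assoc : forall (w x y z : Ob) (h : Hom y z) (g : Hom x y) (f : Hom w x),
      comp w y z h (comp w x y g f) = comp w x z (comp x y z h g) f;
  comp_idl : forall (x y : Ob) (f : Hom x y), comp x y y (idm y) f = f;
  comp_idr : forall (x y : Ob) (f : Hom x y), comp x x y f (idm x) = f;
  comp_addl : forall (x y z : Ob) (g g' : Hom y z) (f : Hom x y),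
      comp x y z (g + g')%R f = (comp x y z g f + comp x y z g' f)%R;
  comp_addr : forall (x y z : Ob) (g : Hom y z) (f f' : Hom x y),
      comp x y z g (f + f')%R = (comp x y z g f + comp x y z g f')%R
}.

Definition upper_triangular (C : linCat) : Prop :=
  exists le : Ob C -> Ob C -> Prop,
    (forall x, le x x) /\
    (forall x y, le x y -> le y x -> x = y) /\
    (forall x y z, le x y -> le y z -> le x z) /\
    (forall (x y : Ob C) (f : Hom C x y), f <> 0%R -> le x y).

(* The endomorphism ring C(x,x), viewed as a one-object linear category. *)
Definition endCat (C : linCat) (x : Ob C) : linCat :=
  @LinCat (unit : eqType) (fun _ _ => Hom C x x)
    (fun _ _ _ => comp C x x x) (fun _ => idm C x)
    (fun _ _ _ _ => comp_assoc C x x x x)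
    (fun _ _ => comp_idl C x x)
    (fun _ _ => comp_idr C x x)
    (fun _ _ _ => comp_addl C x x x)
    (fun _ _ _ => comp_addr C x x x).

(* Abelian groups presented "setoid style": a carrier, an equality,    *)
Record sgroup := SGroup {
  sg_car : Type;
  sg_eqv : sg_car -> sg_car -> Prop;
  sg_zero : sg_car;
  sg_add : sg_car -> sg_car -> sg_car
}.

Definition sg_iso (A B : sgroup) : Prop :=
  exists f : sg_car A -> sg_car B,
    (forall a a', sg_eqv A a a' -> sg_eqv B (f a) (f a')) /\
    (forall a a', sg_eqv B (f (sg_add A a a')) (sg_add B (f a) (f a'))) /\
    (forall a a', sg_eqv B (f a) (f a') -> sg_eqv A a a') /\
    (forall b, exists a, sg_eqv B (f a) b).

(* Direct sum of a family of groups indexed by an eqType (finite support). *)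
Section DirectSum.
Variables (I : eqType) (G : I -> sgroup).

Definition dsum_at (x : I) (e : {i : I & sg_car (G i)}) : seq (sg_car (G x)) :=
  match tag e =P x with
  | ReflectT h => [:: ecast i (sg_car (G i)) h (tagged e)]
  | ReflectF _ => [::]
  end.

Definition dsum_comp (x : I) (s : seq {i : I & sg_car (G i)}) : sg_car (G x) :=
  foldr (sg_add (G x)) (sg_zero (G x)) (flatten (map (dsum_at x) s)).

Definition dsum : sgroup :=
  @SGroup (seq {i : I & sg_car (G i)})
    (fun s t => forall x, sg_eqv (G x) (dsum_comp x s) (dsum_comp x t))
    [::] (fun s t => s ++ t).
End DirectSum.
Arguments dsum {I}.

(* Free abelian group on T modulo relations R: formal sums are lists of  *)
(* signed generators (true = minus sign).                                *)
Inductive feq {T : Type} (R : seq (bool * T) -> seq (bool * T) -> Prop) :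
    seq (bool * T) -> seq (bool * T) -> Prop :=
| feq_refl s : feq R s s
| feq_sym s t : feq R s t -> feq R t s
| feq_trans s t u : feq R s t -> feq R t u -> feq R s u
| feq_cat s1 s2 t1 t2 : feq R s1 t1 -> feq R s2 t2 -> feq R (s1 ++ s2) (t1 ++ t2)
| feq_comm s t : feq R (s ++ t) (t ++ s)
| feq_inv b x : feq R [:: (b, x); (~~ b, x)] [::]
| feq_rel s t : R s t -> feq R s t.

Arguments feq_cat {T R s1 s2 t1 t2}.
Arguments feq_refl {T R}.

Definition fneg {T : Type} (s : seq (bool * T)) : seq (bool * T) :=
  [seq (~~ p.1, p.2) | p <- s].

(* A generator f_n (x) f_{n-1} (x) ... (x) f_0 is the list             *)
(* [:: f_n; f_{n-1}; ...; f_0] of arrows, f_n : x_n -> x_0 and         *)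
(* f_i : x_i -> x_{i+1} (i < n), i.e. a cyclically composable list.     *)
Section HM.
Variable C : linCat.

Record arrow := Arr { asrc : Ob C; atgt : Ob C; amor : Hom C asrc atgt }.
Arguments Arr {asrc atgt}.

(* g o h (when composable; junk otherwise, never used on valid data) *)
Definition comp_arr (g h : arrow) : arrow :=
  match atgt h =P asrc g with
  | ReflectT e =>
      @Arr (asrc h) (atgt g)
        (comp C (asrc h) (asrc g) (atgt g) (amor g)
           (ecast y (Hom C (asrc h) y) e (amor h)))
  | ReflectF _ => g
  end.

Definition cyc (l : seq arrow) : bool :=
  cycle (fun g h => asrc g == atgt h) l.

Definition hgen := seq arrow.
Definition hchain := seq (bool * hgen).

(* i-th face, i < n : f_n (x) .. (x) f_{n-i} f_{n-i-1} (x) .. (x) f_0 *)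
Fixpoint face (i : nat) (l : hgen) : hgen :=
  match i, l with
  | 0, g :: h :: t => comp_arr g h :: t
  | i'.+1, g :: t => g :: face i' t
  | _, _ => l
  end.

(* last face : f_0 f_n (x) f_{n-1} (x) ... (x) f_1 *)
Definition cface (l : hgen) : hgen :=
  match l with
  | g :: rest => comp_arr (last g rest) g :: take (size rest).-1 rest
  | [::] => [::]
  end.

Definition dgen (n : nat) (l : hgen) : hchain :=
  if n is 0 then [::] else
  if cyc l && (size l == n.+1) then
    [seq (odd i, face i l) | i <- iota 0 n] ++ [:: (odd n, cface l)]
  else [::].

Definition hd (n : nat) (c : hchain) : hchain :=
  flatten [seq [seq (p.1 (+) q.1, q.2) | q <- dgen n p.2] | p <- c].

(* Relations presenting C_n = (+)_{x_0..x_n} C(x_n,x_0) (x) ... (x) C(x_0,x_1) *)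
Inductive hrel (n : nat) : hchain -> hchain -> Prop :=
| hrel_bad l : ~~ (cyc l && (size l == n.+1)) -> hrel n [:: (false, l)] [::]
| hrel_lin (l1 l2 : hgen) (x y : Ob C) (a b : Hom C x y) :
    hrel n [:: (false, l1 ++ Arr (a + b)%R :: l2)]
           [:: (false, l1 ++ Arr a :: l2); (false, l1 ++ Arr b :: l2)].

Definition ceqv (n : nat) : hchain -> hchain -> Prop := feq (hrel n).

Definition is_cycle (n : nat) (c : hchain) : Prop := ceqv n.-1 (hd n c) [::].

Lemma hd_cat n a b : hd n (a ++ b) = hd n a ++ hd n b.
Proof. by rewrite /hd map_cat flatten_cat. Qed.

Lemma is_cycle_cat n a b : is_cycle n a -> is_cycle n b -> is_cycle n (a ++ b).
Proof. by move=> Ha Hb; rewrite /is_cycle hd_cat; have /= := feq_cat Ha Hb. Qed.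

Lemma is_cycle_nil n : is_cycle n [::].
Proof. exact: feq_refl. Qed.

Definition hcyc (n : nat) := {c : hchain | is_cycle n c}.

Definition HH (n : nat) : sgroup :=
  @SGroup (hcyc n)
    (fun a b => exists b' : hchain,
        ceqv n (proj1_sig a ++ fneg (proj1_sig b)) (hd n.+1 b'))
    (exist _ [::] (is_cycle_nil n))
    (fun a b => exist _ (proj1_sig a ++ proj1_sig b)
                  (@is_cycle_cat n _ _ (proj2_sig a) (proj2_sig b))).
End HM.

(* Main.v *)
Require Import Defs.
From HB Require Import structures.
From mathcomp Require Import all_boot all_algebra.
Import GRing.Theory.

Section FeqGen.
Context {T : Type} {R : seq (bool * T) -> seq (bool * T) -> Prop}.
Local Notation fq := (feq R).

Lemma fq_trans {s t u} : fq s t -> fq t u -> fq s u.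
Proof. exact: feq_trans. Qed.
Lemma fq_sym {s t} : fq s t -> fq t s.
Proof. exact: feq_sym. Qed.
Lemma fq_catl {s t u} : fq t u -> fq (s ++ t) (s ++ u).
Proof. by move=> H; apply: feq_cat => //; apply: feq_refl. Qed.
Lemma fq_catr {s t u} : fq t u -> fq (t ++ s) (u ++ s).
Proof. by move=> H; apply: feq_cat => //; apply: feq_refl. Qed.

Lemma fq_cancel s : fq (s ++ fneg s) [::].
Proof.
elim: s => [|[b x] s IH] /=; first exact: feq_refl.
have -> : (b, x) :: s ++ (~~ b, x) :: fneg s = [:: (b, x)] ++ (s ++ [:: (~~ b, x)]) ++ fneg s.
  by rewrite /= -catA.
apply: (fq_trans (fq_catl (fq_catr (feq_comm R _ _)))).
have -> : [:: (b, x)] ++ ([:: (~~ b, x)] ++ s) ++ fneg s = [:: (b, x); (~~ b, x)] ++ (s ++ fneg s) by [].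
have := feq_cat (feq_inv R b x) IH; by [].
Qed.

Lemma fq_cancel' s : fq (fneg s ++ s) [::].
Proof. exact: fq_trans (feq_comm _ _ _) (fq_cancel s). Qed.

Lemma fq_fneg s t : fq s t -> fq (fneg s) (fneg t).
Proof.
move=> H.
apply: (@fq_trans _ (fneg s ++ (t ++ fneg t))).
  rewrite -{1}[fneg s]cats0; apply: fq_catl; apply: fq_sym; exact: fq_cancel.
apply: (@fq_trans _ (fneg s ++ (s ++ fneg t))).
  by apply: fq_catl; apply: fq_catr; apply: fq_sym.
rewrite catA; have := fq_catr (s:=fneg t) (fq_cancel' s); by [].
Qed.

Lemma fq_nil_cat s t : fq s [::] -> fq t [::] -> fq (s ++ t) [::].
Proof. move=> H1 H2; have := feq_cat H1 H2; by []. Qed.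

Lemma fq_flatten {I : Type} (f g : I -> seq (bool * T)) (c : seq I) :
  (forall i, fq (f i) (g i)) -> fq (flatten (map f c)) (flatten (map g c)).
Proof.
move=> H; elim: c => [|i c IH] /=; first exact: feq_refl.
exact: feq_cat.
Qed.

Lemma fq_flatten_in {I : Type} (P : pred I) (f g : I -> seq (bool * T)) (c : seq I) :
  all P c -> (forall i, P i -> fq (f i) (g i)) -> fq (flatten (map f c)) (flatten (map g c)).
Proof.
move=> hc H; elim: c hc => [|i c IH] /=; first by move=> _; exact: feq_refl.
by case/andP=> h1 h2; apply: feq_cat; [apply: H|apply: IH].
Qed.

Lemma fq_flatten_nil {I : Type} (f : I -> seq (bool * T)) (c : seq I) :
  (forall i, fq (f i) [::]) -> fq (flatten (map f c)) [::].
Proof.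
move=> H; elim: c => [|i c IH] /=; first exact: feq_refl.
exact: fq_nil_cat.
Qed.

Lemma fq_interleave {I : Type} (u v : I -> seq (bool * T)) (ys : seq I) :
  fq (flatten [seq u y ++ v y | y <- ys]) (flatten (map u ys) ++ flatten (map v ys)).
Proof.
elim: ys => [|y ys IH] /=; first exact: feq_refl.
rewrite -!catA; apply: fq_catl.
apply: fq_trans (fq_catl IH) _.
rewrite !catA; apply: fq_catr; exact: feq_comm.
Qed.

Lemma fq_exchange {I J : Type} (f : I -> J -> seq (bool * T)) (xs : seq I) (c : seq J) :
  fq (flatten [seq flatten [seq f x p | p <- c] | x <- xs])
     (flatten [seq flatten [seq f x p | x <- xs] | p <- c]).
Proof.
elim: c => [|p c IH] /=.
  by elim: xs => [|x xs IH] //=; exact: feq_refl.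
apply: fq_trans (fq_interleave (fun x => f x p) (fun x => flatten [seq f x p0 | p0 <- c]) xs) _.
exact: fq_catl.
Qed.

Lemma fneg_cat (s t : seq (bool * T)) : fneg (s ++ t) = fneg s ++ fneg t.
Proof. exact: map_cat. Qed.

Lemma fneg_flatten {I : Type} (f : I -> seq (bool * T)) c :
  fneg (flatten (map f c)) = flatten [seq fneg (f i) | i <- c].
Proof. by elim: c => //= i c IH; rewrite fneg_cat IH. Qed.

Lemma fq_refl s : fq s s. Proof. exact: feq_refl. Qed.
End FeqGen.

Local Open Scope ring_scope.

Arguments asrc {C} _.
Arguments atgt {C} _.
Arguments amor {C} _.

Section LC.
Variable C : linCat.
Local Notation Hom := (Defs.Hom C).
Local Notation cmp := (Defs.comp C).

Lemma comp0r x y z (g : Hom y z) : cmp x y z g 0 = 0.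
Proof. by apply: (@addrI _ (cmp x y z g 0)); rewrite addr0 -comp_addr addr0. Qed.
Lemma comp0l x y z (f : Hom x y) : cmp x y z 0 f = 0.
Proof. by apply: (@addrI _ (cmp x y z 0 f)); rewrite addr0 -comp_addl addr0. Qed.

Definition iszero (a : arrow C) : bool := amor a == 0.
Definition isz (z : Ob C) (a : arrow C) : bool := (asrc a == z) && (atgt a == z).
Definition ee (g h : arrow C) : bool := asrc g == atgt h.

Lemma gen_zero n b l1 l2 s t :
  ceqv C n [:: (b, l1 ++ Arr C s t 0 :: l2)] [::].
Proof.
set g := l1 ++ _ :: _.
have H0 : ceqv C n [:: (false, g)] [::].
  have H := @feq_rel _ (hrel C n) _ _ (hrel_lin C n l1 l2 s t 0 0); rewrite addr0 in H.
  apply: fq_sym.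
  apply: (fq_trans (fq_sym (fq_cancel [:: (false, g)]))).
  apply: (fq_trans (t := [:: (false, g)] ++ [:: (false, g)] ++ fneg [:: (false, g)])).
    by rewrite catA; apply: fq_catr; exact: H.
  rewrite -[X in feq _ _ X]cats0; apply: fq_catl; exact: fq_cancel.
case: b; last exact: H0.
by have := fq_fneg _ _ H0.
Qed.

Lemma bad_zero n b l : ~~ (cyc C l && (size l == n.+1)) -> ceqv C n [:: (b, l)] [::].
Proof.
move=> h; have H0 : ceqv C n [:: (false, l)] [::] by apply: feq_rel; exact: hrel_bad.
case: b; last exact: H0.
by have := fq_fneg _ _ H0.
Qed.

Lemma HH_eqv n (a b : hcyc C n) :
  ceqv C n (proj1_sig a) (proj1_sig b) -> sg_eqv (HH C n) a b.
Proof.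
move=> H; exists [::] => /=.
exact: (fq_trans (fq_catr H) (fq_cancel _)).
Qed.

Lemma has_zero_split l : has iszero l ->
  exists l1 s t l2, l = l1 ++ Arr C s t 0 :: l2.
Proof.
elim: l => [|[s t f] l IH] //=; case/orP.
  by rewrite /iszero /= => /eqP ->; exists [::], s, t, l.
by case/IH=> l1 [s' [t' [l2 ->]]]; exists (Arr C s t f :: l1), s', t', l2.
Qed.

Lemma gen_has_zero n b l : has iszero l -> ceqv C n [:: (b, l)] [::].
Proof. by case/has_zero_split=> l1 [s [t [l2 ->]]]; exact: gen_zero. Qed.

Lemma comp_arr_zero g h : ee g h -> iszero g || iszero h -> iszero (comp_arr C g h).
Proof.
case: g h => [sg tg fg] [sh th fh]; rewrite /ee /iszero /comp_arr /= => /eqP H.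
subst sg; case: eqP => //= e; rewrite (eq_irrelevance e erefl) /=.
by case/orP=> /eqP ->; rewrite ?comp0l ?comp0r.
Qed.

Lemma face_has_zero i l : sorted ee l -> has iszero l -> has iszero (face C i l).
Proof.
elim: l i => [|g t IH] [|i] //=.
  case: t IH => [|h t'] //= _ /andP[egh _].
  case/orP=> [z|/orP[z|->]]; last by rewrite orbT.
    by rewrite comp_arr_zero ?z.
  by rewrite comp_arr_zero ?z ?orbT.
move=> st /orP[->//|ht]; rewrite IH ?orbT //.
exact: path_sorted st.
Qed.

Lemma cycle_sorted l : cycle ee l -> sorted ee l.
Proof. by case: l => //= g t; rewrite rcons_path => /andP[]. Qed.

Lemma cface_has_zero l : cycle ee l -> has iszero l -> has iszero (cface C l).
Proof.
case: l => //= g t; rewrite rcons_path => /andP[_ el].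
case/orP=> [z|ht]; first by rewrite comp_arr_zero ?z ?orbT.
case/lastP: t el ht => [|r y] //=; rewrite last_rcons size_rcons /= => el.
rewrite -cats1 has_cat /= orbF => /orP[hr|zy].
  by rewrite take_size_cat // hr orbT.
by rewrite comp_arr_zero ?zy.
Qed.

Lemma comp_arr_isz z g h : isz z g -> isz z h -> isz z (comp_arr C g h).
Proof.
case: g h => [sg tg fg] [sh th fh]; rewrite /isz /comp_arr /=.
by case: eqP => e /andP[a b] /andP[c d]; rewrite /= ?a ?b ?c ?d.
Qed.

Lemma face_all_isz z i l : all (isz z) l -> all (isz z) (face C i l).
Proof.
elim: l i => [|g t IH] [|i] //=.
  case: t IH => [|h t'] //= _ /and3P[zg zh ->]; by rewrite comp_arr_isz.
by move=> /andP[a b]; rewrite a IH.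
Qed.

Lemma cface_all_isz z l : all (isz z) l -> all (isz z) (cface C l).
Proof.
case: l => //= g t /andP[zg zt].
rewrite comp_arr_isz //; last first.
  by case/lastP: t zt => //= r y; rewrite last_rcons all_rcons => /andP[].
by move: zt; rewrite -{1}(cat_take_drop (size t).-1 t) all_cat => /andP[].
Qed.

Lemma size_face i l : (i < (size l).-1)%N -> size (face C i l) = (size l).-1.
Proof.
elim: l i => [|g t IH] [|i] //=.
  by case: t IH.
case: t IH => [|h t] //= IH hi; rewrite IH //.
Qed.

Lemma size_cface l : (1 < size l)%N -> size (cface C l) = (size l).-1.
Proof.
case: l => //= g [|h t] //= _; rewrite size_take /=.
by case: (size t) => //= k; rewrite ltnSn.
Qed.

End LC.
Arguments iszero {C} a. Arguments isz {C} z a. Arguments ee {C} g h.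

Local Close Scope ring_scope.

Section Tri.
Variable C : linCat.
Variable le : Ob C -> Ob C -> Prop.
Hypothesis le_refl : forall x, le x x.
Hypothesis le_anti : forall x y, le x y -> le y x -> x = y.
Hypothesis le_trans : forall x y z, le x y -> le y z -> le x z.
Hypothesis le_nz : forall (x y : Ob C) (f : Defs.Hom C x y), f <> 0%R -> le x y.

Lemma nz_le a : ~~ iszero a -> le (asrc a) (atgt a).
Proof. by rewrite /iszero => /eqP; apply: le_nz. Qed.

Lemma tri (a0 : arrow C) s : cycle ee (a0 :: s) -> ~~ has iszero (a0 :: s) ->
  all (isz (asrc a0)) (a0 :: s).
Proof.
rewrite -all_predC => cyc /andP[nz0 nzs].
set L := rcons (a0 :: s) a0.
set o := fun k => asrc (nth a0 L k).
have nzL : all (predC iszero) L by rewrite /L all_rcons; apply/andP; split =>//=; apply/andP.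
have edge : forall k, k < (size s).+1 -> ee (nth a0 L k) (nth a0 L k.+1).
  move=> k hk; have := (pathP a0 cyc k); rewrite size_rcons => /(_ hk).
  by rewrite /L rcons_cons.
have step : forall k, k < (size s).+1 -> le (o k.+1) (o k).
  move=> k hk; have := edge k hk; rewrite /ee => /eqP e.
  rewrite /o e; apply: nz_le.
  by apply: (all_nthP a0 nzL); rewrite /L size_rcons /= ltnS.
have desc : forall i j, i <= j -> j <= (size s).+1 -> le (o j) (o i).
  move=> i j; elim: j => [|j IH]; first by rewrite leqn0 => /eqP ->.
  rewrite leq_eqVlt => /orP[/eqP -> _|hij hj]; first exact: le_refl.
  apply: le_trans (step j hj) (IH hij (ltnW hj)).
have oend : o (size s).+1 = o 0.
  by rewrite /o /L nth_rcons /= ltnn eqxx.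
have oeq : forall k, k <= (size s).+1 -> o k = o 0.
  move=> k hk; apply: le_anti; first exact: desc.
  by rewrite -oend; apply: desc.
have nthl : forall k, k < (size s).+1 -> nth a0 (a0 :: s) k = nth a0 L k.
  by move=> k hk; rewrite /L nth_rcons /= hk.
apply/(all_nthP a0) => k hk; rewrite nthl //.
rewrite /isz; apply/andP; split.
  by apply/eqP; have := oeq k (ltnW hk).
case: k hk => [|k] hk.
  have := edge (size s) (ltnSn _); rewrite /ee => /eqP.
  have -> : nth a0 L (size s).+1 = a0 by rewrite /L nth_rcons /= ltnn eqxx.
  by move <-; apply/eqP; have := oeq (size s) (leqW (leqnn _)).
have := edge k (ltnW hk); rewrite /ee => /eqP <-.
by apply/eqP; have := oeq k (ltnW (ltnW hk)).
Qed.
End Tri.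

Section EndC.
Variable C : linCat.
Variable x : Ob C.
Local Notation E := (endCat C x).

Definition emb (a : arrow E) : arrow C := Arr C x x (amor a).

Definition convH {s t} (f : Defs.Hom C s t) : Defs.Hom C x x :=
  match s =P x, t =P x with
  | ReflectT e1, ReflectT e2 =>
      ecast u (Defs.Hom C u x) e1 (ecast v (Defs.Hom C s v) e2 f)
  | _, _ => 0%R
  end.

Definition conv (a : arrow C) : Defs.Hom C x x := convH (amor a).
Definition proj (a : arrow C) : arrow E := Arr E tt tt (conv a).

Lemma convHxx (f : Defs.Hom C x x) : convH f = f.
Proof.
rewrite /convH; case: (x =P x) => [e|/(_ erefl)//].
by rewrite (eq_irrelevance e erefl).
Qed.

Lemma convH0 s t : @convH s t 0%R = 0%R.
Proof.
rewrite /convH; case: eqP => // e1; case: eqP => // e2.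
by subst.
Qed.

Lemma convHD s t (f g : Defs.Hom C s t) : convH (f + g)%R = (convH f + convH g)%R.
Proof.
rewrite /convH; case: eqP => [e1|_]; last by rewrite addr0.
case: eqP => [e2|_]; last by rewrite addr0.
by subst.
Qed.

Lemma proj_emb a : proj (emb a) = a.
Proof.
case: a => [[] [] f]; by rewrite /proj /emb /conv /= convHxx.
Qed.

Lemma emb_proj a : isz x a -> emb (proj a) = a.
Proof.
case: a => s t f; rewrite /isz /= => /andP[/eqP e1 /eqP e2]; subst.
by rewrite /emb /proj /conv /= convHxx.
Qed.

Lemma comp_arr_emb g h : comp_arr C (emb g) (emb h) = emb (comp_arr E g h).
Proof.
case: g h => [[] [] fg] [[] [] fh].
rewrite /comp_arr /emb /=; case: eqP => // e; rewrite (eq_irrelevance e erefl) /=.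
case: eqP => // e'; by rewrite (eq_irrelevance e' erefl).
Qed.

Lemma face_emb i l : face C i (map emb l) = map emb (face E i l).
Proof.
elim: l i => [|g t IH] [|i] //=.
  by case: t IH => [|h t] //= _; rewrite comp_arr_emb.
by rewrite IH.
Qed.

Lemma cface_emb l : cface C (map emb l) = map emb (cface E l).
Proof.
case: l => //= g t; rewrite last_map comp_arr_emb size_map map_take //.
Qed.

Lemma cyc_emb l : cyc C (map emb l).
Proof.
case: l => //= g t; rewrite -map_rcons path_map.
suff H : forall a s, path (relpre emb (fun g h : arrow C => asrc g == atgt h)) a s by apply: H.
move=> a s; elim: s a => //= b s IH a; by rewrite IH andbT /relpre /= eqxx.
Qed.

Lemma cycE (l : hgen E) : cyc E l.
Proof.
case: l => //= g t.
suff H : forall a s, path (fun g h : arrow E => asrc g == atgt h) a s by apply: H.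
move=> a s; elim: s a => //= b s IH a; rewrite IH andbT.
Qed.

Definition G (c : hchain E) : hchain C := [seq (p.1, map emb p.2) | p <- c].

Lemma dgen_emb n l : dgen C n (map emb l) = G (dgen E n l).
Proof.
rewrite /dgen; case: n => // n; rewrite cyc_emb cycE size_map !andTb.
case: ifP => // _; rewrite /G map_cat -map_comp.
congr (_ ++ _); first by apply: eq_map => i; rewrite /= face_emb.
by rewrite cface_emb.
Qed.

Lemma G_cat a b : G (a ++ b) = G a ++ G b.
Proof. exact: map_cat. Qed.

Lemma G_fneg a : G (fneg a) = fneg (G a).
Proof. by rewrite /G /fneg -!map_comp. Qed.

Lemma hd_G n c : hd C n (G c) = G (hd E n c).
Proof.
elim: c => //= [[b l] c IH]; rewrite /hd /= -/(hd C n (G c)) -/(hd E n c) IH.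
rewrite G_cat dgen_emb /G -!map_comp; congr (_ ++ _).
Qed.

End EndC.

Arguments emb {C x} a.
Arguments proj {C x} a.
Arguments G {C x} c.

Definition sgn {T : Type} (b : bool) (c : seq (bool * T)) : seq (bool * T) :=
  [seq (b (+) q.1, q.2) | q <- c].

Lemma sgn_fq {T : Type} R (b : bool) (s : seq (bool * T)) :
  feq R s [::] -> feq R (sgn b s) [::].
Proof.
have E0 : forall s : seq (bool * T), sgn false s = s.
  by elim=> //= [[c y] s' IH]; rewrite IH.
have E1 : forall s : seq (bool * T), sgn true s = fneg s by [].
by case: b; rewrite ?E0 ?E1 // => H; have := fq_fneg _ _ H.
Qed.

Section FC.
Variable C : linCat.
Variable x : Ob C.
Local Notation E := (endCat C x).

Lemma hd_cons (D : linCat) n p c :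
  hd D n (p :: c) = sgn p.1 (dgen D n p.2) ++ hd D n c.
Proof. by []. Qed.

Lemma hd0 (D : linCat) c : hd D 0 c = [::].
Proof. by elim: c => // p c IH; rewrite hd_cons IH. Qed.

Lemma hd_sgn (D : linCat) n b c : hd D n (sgn b c) = sgn b (hd D n c).
Proof.
elim: c => // [[b' l] c IH]; rewrite /= !hd_cons IH /sgn map_cat -map_comp /=.
by congr (_ ++ _); apply: eq_map => q /=; rewrite addbA.
Qed.

Definition Fg n (p : bool * hgen C) : hchain E :=
  if (size p.2 == n.+1) && all (isz x) p.2 then [:: (p.1, map proj p.2)] else [::].
Definition F n (c : hchain C) : hchain E := flatten (map (Fg n) c).

Lemma F_cat n a b : F n (a ++ b) = F n a ++ F n b.
Proof. by rewrite /F map_cat flatten_cat. Qed.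

Lemma F_sgn n b c : F n (sgn b c) = sgn b (F n c).
Proof.
elim: c => // [[b' l] c IH]; rewrite /= /F /= -/(F n c) -/(F n (sgn b c)) IH.
rewrite /sgn map_cat; congr (_ ++ _); rewrite /Fg /=; by case: ifP.
Qed.

Lemma F_fneg n c : F n (fneg c) = fneg (F n c).
Proof. exact: (F_sgn n true c). Qed.

Lemma isz_emb (a : arrow E) : isz x (emb a).
Proof. by rewrite /isz /= eqxx. Qed.

Lemma all_isz_emb (l : hgen E) : all (isz x) (map (@emb C x) l).
Proof. by elim: l => //= a l ->; rewrite isz_emb. Qed.

Lemma map_proj_emb (l : hgen E) : map proj (map (@emb C x) l) = l.
Proof. by elim: l => //= a l ->; rewrite proj_emb. Qed.

Lemma map_emb_proj (l : hgen C) : all (isz x) l -> map (@emb C x) (map proj l) = l.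
Proof. by elim: l => //= a l IH /andP[h1 h2]; rewrite IH // emb_proj. Qed.

Lemma cyc_isz l : all (isz x) l -> cyc C l.
Proof. by move/map_emb_proj <-; exact: cyc_emb. Qed.

Lemma F_G m d : all (fun q => size q.2 == m.+1) d -> F m (G d) = d.
Proof.
elim: d => // [[b l] d IH] /= /andP[hs hd].
rewrite /F /= -/(F m (G d)) IH // /Fg /= size_map hs all_isz_emb /=.
by rewrite map_proj_emb.
Qed.

Lemma iszero_proj (a : arrow C) : iszero a -> iszero (@proj C x a).
Proof.
case: a => s t f; rewrite /iszero /= => /eqP ->.
by rewrite /proj /conv /= convH0.
Qed.

Lemma has_iszero_proj (l : hgen C) : has iszero l -> has iszero (map (@proj C x) l).
Proof. by elim: l => //= a l IH /orP[/iszero_proj ->|/IH ->]; rewrite ?orbT. Qed.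

Lemma F_zero m d : all (fun q => has iszero q.2) d -> ceqv E m (F m d) [::].
Proof.
elim: d => [|[b l] d IH] /=; first by move=> _; apply: feq_refl.
case/andP=> hz hd; rewrite /F /= -/(F m d).
apply: fq_nil_cat; last exact: IH.
rewrite /Fg /=; case: ifP => _; last exact: feq_refl.
by apply: gen_has_zero; exact: has_iszero_proj.
Qed.

Lemma F_other m z d : z != x ->
  all (fun q => all (isz z) q.2 && (0 < size q.2)) d -> F m d = [::].
Proof.
move=> zx; elim: d => [|[b l] d IH] //= /andP[/andP[hz hs] hd].
rewrite /F /= -/(F m d) IH // cats0 /Fg /=.
case: l hz hs {hd} => //= a l /andP[/andP[/eqP e1 _] _] _.
rewrite /isz e1 (negbTE zx) /=. by rewrite andbF.
Qed.

Lemma F_feq n s t : ceqv C n s t -> ceqv E n (F n s) (F n t).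
Proof.
elim=> {s t}.
- move=> s; exact: feq_refl.
- by move=> s t _ H; apply: fq_sym.
- by move=> s t u _ H1 _ H2; apply: fq_trans H1 H2.
- by move=> s1 s2 t1 t2 _ H1 _ H2; rewrite !F_cat; apply: feq_cat.
- by move=> s t; rewrite !F_cat; apply: feq_comm.
- move=> b l; rewrite /F /= /Fg /=; case: ifP => _; last exact: feq_refl.
  exact: feq_inv.
- move=> s t [l hl|l1 l2 s0 t0 a b].
    rewrite /F /= /Fg /=; case: ifP => [/andP[hs ha]|_]; last exact: feq_refl.
    by move: hl; rewrite cyc_isz // hs.
  rewrite /F /= /Fg /= !size_cat /= !all_cat /=.
  have -> : isz x (Arr C s0 t0 (a + b)%R) = isz x (Arr C s0 t0 a) by [].
  have -> : isz x (Arr C s0 t0 b) = isz x (Arr C s0 t0 a) by [].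
  case: ifP => _; last exact: feq_refl.
  rewrite !map_cat /= /proj /conv /= convHD.
  apply: feq_rel; exact: hrel_lin.
Qed.

End FC.
Arguments F {C} x n c. Arguments Fg {C} x n p.

Lemma hd_flatten (D : linCat) n (cs : seq (hchain D)) :
  hd D n (flatten cs) = flatten (map (hd D n) cs).
Proof. by elim: cs => //= c cs IH; rewrite hd_cat IH. Qed.

Lemma hd_split (D : linCat) n (c : hchain D) : hd D n c = flatten [seq hd D n [:: p] | p <- c].
Proof. by elim: c => //= p c IH; rewrite hd_cons IH hd_cons cats0. Qed.

Section Chain.
Variable C : linCat.
Variable le : Ob C -> Ob C -> Prop.
Hypothesis le_refl : forall x, le x x.
Hypothesis le_anti : forall x y, le x y -> le y x -> x = y.
Hypothesis le_trans : forall x y z, le x y -> le y z -> le x z.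
Hypothesis le_nz : forall (x y : Ob C) (f : Defs.Hom C x y), f <> 0%R -> le x y.
Variable x : Ob C.
Local Notation E := (endCat C x).

Lemma F_flatten n (cs : seq (hchain C)) : F x n (flatten cs) = flatten (map (F x n) cs).
Proof. by elim: cs => //= c cs IH; rewrite F_cat IH. Qed.

Lemma F_hd_gen n p : ceqv E n.-1 (F x n.-1 (hd C n [:: p])) (hd E n (Fg x n p)).
Proof.
case: n => [|m]; first by rewrite !hd0; apply: feq_refl.
case: p => b l; rewrite hd_cons cats0 F_sgn /Fg; cbn [fst snd].
case: ifP => [/andP[hs ha]|hv].
  rewrite hd_cons cats0; cbn [fst snd].
  rewrite -{1}(map_emb_proj _ _ _ ha) dgen_emb F_G; first exact: feq_refl.
  set l' := map _ l; have hs' : size l' = m.+2 by rewrite size_map; apply/eqP.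
  rewrite /dgen cycE hs' eqxx andTb all_cat; apply/andP; split.
    rewrite all_map; apply/allP => i; rewrite mem_iota add0n => /andP[_ hi]; cbn [snd].
    by rewrite /preim /= size_face hs'.
  by rewrite /= size_cface ?hs' ?andbT.
apply: sgn_fq.
rewrite /dgen; case: ifP => [/andP[hc hs]|_]; last by apply: feq_refl.
case hz: (has iszero l).
  apply: F_zero; rewrite all_cat; apply/andP; split.
    rewrite all_map; apply/allP => i _; rewrite /preim /=.
    by rewrite face_has_zero ?hz // cycle_sorted.
  by rewrite /= cface_has_zero ?hz ?andbT.
case: l hv hc hs hz => // a0 s hv hc hs hz.
have := @tri C le le_refl le_anti le_trans le_nz a0 s hc (negbT hz) => hall.
have zx : asrc a0 != x.
  apply/negP => /eqP e; move: hv; by rewrite -e hs hall.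
rewrite (F_other _ _ _ _ _ zx) ?hs; first exact: feq_refl.
rewrite all_cat; apply/andP; split.
  rewrite all_map; apply/allP => i; rewrite mem_iota add0n => /andP[_ hi]; rewrite /preim /=.
  by rewrite face_all_isz // size_face (eqP hs).
apply/andP; split => //; apply/andP; split; first exact: cface_all_isz.
by rewrite size_cface ?(eqP hs).
Qed.

Lemma F_hd n c : ceqv E n.-1 (F x n.-1 (hd C n c)) (hd E n (F x n c)).
Proof.
rewrite hd_split F_flatten -map_comp /F hd_flatten -map_comp.
by apply: fq_flatten => p /=; apply: F_hd_gen.
Qed.
End Chain.

Lemma G_feq (C : linCat) (x : Ob C) n s t :
  ceqv (endCat C x) n s t -> ceqv C n (@G C x s) (@G C x t).
Proof.
elim=> {s t}.
- move=> s; exact: feq_refl.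
- by move=> s t _ H; apply: fq_sym.
- by move=> s t u _ H1 _ H2; apply: fq_trans H1 H2.
- by move=> s1 s2 t1 t2 _ H1 _ H2; rewrite !G_cat; apply: feq_cat.
- by move=> s t; rewrite !G_cat; apply: feq_comm.
- move=> b l; exact: feq_inv.
- move=> s t [l hl|l1 l2 s0 t0 a b].
    apply: feq_rel; apply: hrel_bad; move: hl.
    by rewrite /= cyc_emb cycE size_map.
  rewrite /G /= !map_cat /=.
  apply: feq_rel; exact: (hrel_lin C n _ _ x x a b).
Qed.

Lemma flatten_sel {A : eqType} {T : Type} (xs : seq A) (P : pred A) (z : A) (X : seq T) :
  uniq xs -> (forall y, P y -> y = z) ->
  flatten [seq if P y then X else [::] | y <- xs] = if (z \in xs) && P z then X else [::].
Proof.
move=> + hP; elim: xs => //= y ys IH /andP[yn u]; rewrite IH // in_cons.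
case: ifP => Py.
  have ey := hP _ Py; subst y.
  by rewrite eqxx (negbTE yn) /= Py cats0.
case: eqP => [ey|_] //=; subst y.
by rewrite (negbTE yn) Py.
Qed.

Definition objs (C : linCat) (c : hchain C) : seq (Ob C) :=
  flatten [seq map asrc p.2 | p <- c].

Section Decomp.
Variable C : linCat.
Variable le : Ob C -> Ob C -> Prop.
Hypothesis le_refl : forall x, le x x.
Hypothesis le_anti : forall x y, le x y -> le y x -> x = y.
Hypothesis le_trans : forall x y z, le x y -> le y z -> le x z.
Hypothesis le_nz : forall (x y : Ob C) (f : Defs.Hom C x y), f <> 0%R -> le x y.

Lemma GFg y n b (l : hgen C) :
  @G C y (Fg y n (b, l)) = if (size l == n.+1) && all (isz y) l then [:: (b, l)] else [::].
Proof.
rewrite /Fg; cbn [fst snd]; case: ifP => // /andP[_ ha].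
by rewrite /G /= map_emb_proj.
Qed.

Lemma decomp_gen n (xs : seq (Ob C)) b (l : hgen C) :
  uniq xs -> all (fun o => o \in xs) (map asrc l) ->
  ceqv C n [:: (b, l)] (flatten [seq @G C y (Fg y n (b, l)) | y <- xs]).
Proof.
move=> u hl.
case: l hl => [|a0 s] hl.
  suff -> : flatten [seq @G C y (Fg y n (b, [::])) | y <- xs] = [::] by apply: bad_zero.
  by elim: xs {u hl} => //= y ys ->.
under eq_map => y do rewrite GFg.
rewrite (@flatten_sel _ _ _ _ (asrc a0)) //; last first.
  by move=> y /andP[_ /= /andP[/andP[/eqP -> _] _]].
move: hl => /= /andP[-> _] /=.
case hP: ((size (a0 :: s) == n.+1) && all (isz (asrc a0)) (a0 :: s)).
  exact: feq_refl.
case hv: (cyc C (a0 :: s) && (size (a0 :: s) == n.+1)); last first.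
  by apply: bad_zero; rewrite hv.
case/andP: hv => hc hs.
case hz: (has iszero (a0 :: s)); first exact: gen_has_zero.
have := @tri C le le_refl le_anti le_trans le_nz a0 s hc (negbT hz).
by move: hP; rewrite hs /= => ->.
Qed.
End Decomp.
Arguments objs {C} c.

Lemma F_notin (C : linCat) (y : Ob C) n c : y \notin objs c -> F y n c = [::].
Proof.
elim: c => // [[b l] c IH]; rewrite /objs /= mem_cat negb_or => /andP[h1 h2].
rewrite /F /= -/(F y n c) IH // cats0 /Fg /=.
case: l h1 => //= a l; rewrite in_cons negb_or => /andP[h _].
by rewrite /isz [asrc a == y]eq_sym (negbTE h) /= andbF.
Qed.

Lemma FG_ne (C : linCat) (y z : Ob C) n c : z != y -> F y n (@G C z c) = [::].
Proof.
move=> zy; elim: c => // [[b l] c IH]; rewrite /F /= -/(F y n (G c)) IH cats0 /Fg /=.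
case: l => //= a l; by rewrite /isz /= (negbTE zy) /= andbF.
Qed.

Lemma FG_sim (C : linCat) (y : Ob C) n c : ceqv (endCat C y) n (F y n (@G C y c)) c.
Proof.
elim: c => [|[b l] c IH]; first exact: feq_refl.
rewrite /F /= -/(F y n (G c)) -cat1s; apply: feq_cat => //.
rewrite /Fg /= size_map all_isz_emb andbT map_proj_emb.
case: ifP => hs; first exact: feq_refl.
apply: fq_sym; apply: bad_zero; by rewrite hs andbF.
Qed.

Section Decomp2.
Variable C : linCat.
Variable le : Ob C -> Ob C -> Prop.
Hypothesis le_refl : forall x, le x x.
Hypothesis le_anti : forall x y, le x y -> le y x -> x = y.
Hypothesis le_trans : forall x y z, le x y -> le y z -> le x z.
Hypothesis le_nz : forall (x y : Ob C) (f : Defs.Hom C x y), f <> 0%R -> le x y.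

Lemma decomp n (c : hchain C) xs : uniq xs -> all (fun o => o \in xs) (objs c) ->
  ceqv C n c (flatten [seq @G C y (F y n c) | y <- xs]).
Proof.
move=> u ho.
have E1 : forall y, @G C y (F y n c) = flatten [seq @G C y (Fg y n p) | p <- c].
  by move=> y; rewrite /F /G map_flatten -map_comp.
under eq_map => y do rewrite E1.
apply: fq_trans; last apply: fq_sym; last apply: fq_exchange.
rewrite -{1}(flatten_seq1 c).
apply: (@fq_flatten_in _ _ _ (fun p => all (fun o => o \in xs) (map asrc p.2))).
  move: ho; rewrite /objs; elim: (c) => //= p c0 IH; rewrite all_cat => /andP[-> /IH ->]. done.
by case=> b l /= hl; apply: (@decomp_gen C le le_refl le_anti le_trans le_nz n xs b l u hl).
Qed.
End Decomp2.

Section Dsum.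
Variable C : linCat.
Variable i : nat.
Definition Gf := fun y : Ob C => HH (endCat C y) i.

Lemma proj_foldr y (L : seq (sg_car (Gf y))) :
  proj1_sig (foldr (sg_add (Gf y)) (sg_zero (Gf y)) L) = flatten (map (@proj1_sig _ _) L).
Proof. by elim: L => //= a L ->. Qed.

Lemma proj_dsum y s :
  proj1_sig (dsum_comp _ Gf y s) =
  flatten [seq flatten (map (@proj1_sig _ _) (dsum_at _ Gf y e)) | e <- s].
Proof.
rewrite /dsum_comp proj_foldr.
by elim: s => //= e s IH; rewrite map_cat flatten_cat IH.
Qed.

Lemma dsum_at_eq y (v : sg_car (Gf y)) : dsum_at _ Gf y (existT _ y v) = [:: v].
Proof.
rewrite /dsum_at; case: eqP => //= e; by rewrite (eq_irrelevance e erefl).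
Qed.

Lemma dsum_at_ne y z (v : sg_car (Gf z)) : z != y -> dsum_at _ Gf y (existT _ z v) = [::].
Proof. by move=> zy; rewrite /dsum_at; case: eqP => //= e; rewrite e eqxx in zy. Qed.
End Dsum.

Section Main.
Variable C : linCat.
Variable le : Ob C -> Ob C -> Prop.
Hypothesis le_refl : forall x, le x x.
Hypothesis le_anti : forall x y, le x y -> le y x -> x = y.
Hypothesis le_trans : forall x y z, le x y -> le y z -> le x z.
Hypothesis le_nz : forall (x y : Ob C) (f : Defs.Hom C x y), f <> 0%R -> le x y.
Variable i : nat.

Lemma F_cycle y (c : hchain C) : is_cycle C i c -> is_cycle (endCat C y) i (F y i c).
Proof.
move=> H; rewrite /is_cycle.
have h1 := F_feq C y i.-1 _ _ H.
have h2 := @F_hd C le le_refl le_anti le_trans le_nz y i c.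
exact: fq_trans (fq_sym h2) h1.
Qed.

Definition Fcyc y (a : hcyc C i) : hcyc (endCat C y) i :=
  exist _ (F y i (sval a)) (@F_cycle y _ (svalP a)).

Definition fmap (a : hcyc C i) : seq {y : Ob C & sg_car (Gf C i y)} :=
  [seq existT _ y (Fcyc y a) | y <- undup (objs (sval a))].

Lemma projF y a : proj1_sig (dsum_comp _ (Gf C i) y (fmap a)) = F y i (sval a).
Proof.
rewrite proj_dsum /fmap.
have -> : [seq flatten [seq proj1_sig i0 | i0 <- dsum_at _ (Gf C i) y e] | e <- [seq existT _ y0 (Fcyc y0 a) | y0 <- undup (objs (sval a))]]
   = [seq (if z == y then F y i (sval a) else [::]) | z <- undup (objs (sval a))].
  rewrite -map_comp; apply: eq_map => z /=.
  case: (z =P y) => [<-|/eqP ne]; first by rewrite dsum_at_eq /= cats0.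
  by rewrite dsum_at_ne.
rewrite (@flatten_sel _ _ _ (fun z => z == y) y) ?undup_uniq //; last by move=> z /eqP.
rewrite mem_undup eqxx andbT; case: ifP => // hn.
by rewrite F_notin // hn.
Qed.


Lemma dsum_cat y s t :
  proj1_sig (dsum_comp _ (Gf C i) y (s ++ t)) =
  proj1_sig (dsum_comp _ (Gf C i) y s) ++ proj1_sig (dsum_comp _ (Gf C i) y t).
Proof. by rewrite !proj_dsum map_cat flatten_cat. Qed.

Lemma main_iso : sg_iso (HH C i) (dsum (Gf C i)).
Proof.
exists fmap; split; [|split; [|split]].
- move=> a a' [b' H] y; exists (F y i.+1 b').
  rewrite !projF -F_fneg -F_cat.
  apply: fq_trans (F_feq C y i _ _ H) _.
  exact: (@F_hd C le le_refl le_anti le_trans le_nz y i.+1 b').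
- move=> a a' y; apply: HH_eqv.
  rewrite dsum_cat !projF /= F_cat; exact: feq_refl.
- move=> a a' H.
  set xs := undup (objs (sval a) ++ objs (sval a')).
  have hxs : uniq xs := undup_uniq _.
  have ha : all (fun o => o \in xs) (objs (sval a)).
    by apply/allP => o ho; rewrite mem_undup mem_cat ho.
  have ha' : all (fun o => o \in xs) (objs (sval a')).
    by apply/allP => o ho; rewrite mem_undup mem_cat ho orbT.
  have [B HB] : exists B, ceqv C i
      (flatten [seq @G C y (F y i (sval a) ++ fneg (F y i (sval a'))) | y <- xs])
      (hd C i.+1 B).
    elim: (xs) => [|y ys [B IH]]; first by exists [::]; apply: feq_refl.
    have [b' Hb] := H y; rewrite !projF in Hb.
    exists (@G C y b' ++ B); rewrite /= hd_cat hd_G; apply: feq_cat => //.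
    exact: G_feq.
  exists B.
  apply: fq_trans; last exact: HB.
  apply: (fq_trans (feq_cat
     (@decomp C le le_refl le_anti le_trans le_nz i (sval a) xs hxs ha)
     (fq_fneg _ _ (@decomp C le le_refl le_anti le_trans le_nz i (sval a') xs hxs ha')))).
  rewrite fneg_flatten.
  apply: fq_trans; first by apply: fq_sym; apply: fq_interleave.
  apply: fq_flatten => y; rewrite G_cat G_fneg; exact: feq_refl.
- move=> s.
  set c := flatten [seq @G C (tag e) (sval (tagged e)) | e <- s].
  have hc : is_cycle C i c.
    rewrite /is_cycle /c hd_flatten -map_comp.
    apply: fq_flatten_nil => e /=; rewrite hd_G.
    by have := G_feq C (tag e) i.-1 _ _ (svalP (tagged e)).
  exists (exist _ c hc) => y; apply: HH_eqv.
  rewrite projF /= proj_dsum /c F_flatten -map_comp.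
  apply: fq_flatten => -[z v] /=.
  case: (z =P y) => [ezy|/eqP ne].
    subst z; rewrite dsum_at_eq /= cats0; exact: FG_sim.
  rewrite dsum_at_ne // FG_ne //; exact: feq_refl.
Qed.
End Main.


Theorem lemma4p1 (C : linCat) (hC : upper_triangular C) (i : nat) :
  sg_iso (HH C i) (dsum (fun x : Ob C => HH (endCat C x) i)).
Proof.
case: hC => le [h1 [h2 [h3 h4]]].
exact: (@main_iso C le h1 h2 h3 h4 i).
Qed.
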